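(* Let $\Omega$ be the set of real symmetric $m\times m$ matrices, $\mathcal{P}$ the set of $m\times m$ orthogonal matrices, and $s(A,B,P)=\|AP-PB\|$ for $A,B\in\Omega$, $P\in\mathcal{P}$, with $\|\cdot\|$ an orthogonally invariant matrix norm. Let $\Lambda_{A_i}\in\mathbb{R}^m$ be the vector of eigenvalues of $A_i$, ordered from largest to smallest. Then $$d_\mathcal{G}(A_{1:n})=\frac12\sum_{i,j\in[n]}\|\Lambda_{A_i}-\Lambda_{A_j}\|,$$ where $d_\mathcal{G}(A_{1:n})=\min_{P\in S}\frac12\sum_{i,j\in[n]}s(A_i,A_j,P_{i,j})$ with $S=\{\{P_{i,j}\}_{i,j\in[n]}: P_{i,j}\in\mathcal{P},\ P_{i,k}P_{k,j}=P_{i,j}\ \forall i,j,k\in[n],\ P_{i,i}=I\ \forall i\in[n]\}$.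
   Context: The vector norm on the right-hand side is the one corresponding to the matrix norm: the Euclidean norm when the matrix norm is the Frobenius norm, and the $\infty$-norm when the matrix norm is the operator 2-norm. *)

(* Defs.v *)
From HB Require Import structures.
From mathcomp Require Import all_boot all_order all_algebra.
From mathcomp Require Import boolp classical_sets reals.
Set Implicit Arguments. Unset Strict Implicit. Unset Printing Implicit Defensive.
Import Order.TTheory GRing.Theory Num.Theory.
Local Open Scope ring_scope.
Local Open Scope classical_set_scope.

Definition symmetric_mx {R : realType} m (A : 'M[R]_m) : Prop := A^T = A.

Definition orthogonal_mx {R : realType} m (P : 'M[R]_m) : Prop :=
  P^T *m P = 1%:M.

Definition eucl_cV {R : realType} m (x : 'cV[R]_m) : R :=
  Num.sqrt (\sum_(i < m) x i 0 ^+ 2).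

Definition frob_norm {R : realType} m (A : 'M[R]_m) : R :=
  Num.sqrt (\sum_(i < m) \sum_(j < m) A i j ^+ 2).

Definition op2_norm {R : realType} m (A : 'M[R]_m) : R :=
  sup [set eucl_cV (A *m x) | x in [set x : 'cV[R]_m | eucl_cV x = 1]].

Definition eucl_rV {R : realType} m (v : 'rV[R]_m) : R :=
  Num.sqrt (\sum_(i < m) v 0 i ^+ 2).
Definition inf_rV {R : realType} m (v : 'rV[R]_m) : R :=
  \big[Num.max/0]_(i < m) `|v 0 i|.

(* The two orthogonally invariant norms considered, with their
   corresponding vector norms. *)
Inductive norm_choice := Frobenius | Operator2.

Definition mat_norm {R : realType} (c : norm_choice) m (A : 'M[R]_m) : R :=
  match c with Frobenius => frob_norm A | Operator2 => op2_norm A end.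

Definition vec_norm {R : realType} (c : norm_choice) m (v : 'rV[R]_m) : R :=
  match c with Frobenius => eucl_rV v | Operator2 => inf_rV v end.

Definition s_cost {R : realType} (c : norm_choice) m (A B P : 'M[R]_m) : R :=
  mat_norm c (A *m P - P *m B).

(* lam is the vector of eigenvalues of A (with multiplicity, i.e. the
   roots of the characteristic polynomial), ordered from largest to smallest *)
Definition eigvals_desc {R : realType} m (A : 'M[R]_m) (lam : 'rV[R]_m) : Prop :=
  char_poly A = \prod_(i < m) ('X - (lam 0 i)%:P) /\
  (forall i j : 'I_m, (i <= j)%N -> lam 0 j <= lam 0 i).

Definition sync_set {R : realType} m n (P : 'I_n -> 'I_n -> 'M[R]_m) : Prop :=
  (forall i j, orthogonal_mx (P i j)) /\
  (forall i j k, P i k *m P k j = P i j) /\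
  (forall i, P i i = 1%:M).

Definition sync_cost {R : realType} (c : norm_choice) m n
  (A : 'I_n -> 'M[R]_m) (P : 'I_n -> 'I_n -> 'M[R]_m) : R :=
  2^-1 * \sum_(i < n) \sum_(j < n) s_cost c (A i) (A j) (P i j).

Definition is_dG {R : realType} (c : norm_choice) m n
  (A : 'I_n -> 'M[R]_m) (v : R) : Prop :=
  (exists P, sync_set P /\ sync_cost c A P = v) /\
  (forall P, sync_set P -> v <= sync_cost c A P).

(* Main.v *)
Require Import Defs.
From HB Require Import structures.
From mathcomp Require Import all_boot all_order all_algebra.
From mathcomp Require Import boolp classical_sets reals.
From mathcomp Require Import ring lra.
Import Order.TTheory GRing.Theory Num.Theory.
Local Open Scope ring_scope.
Set Implicit Arguments. Unset Strict Implicit. Unset Printing Implicit Defensive.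
Lemma zero_row_ker {R : realType} n (L : 'M[R]_n) (i0 : 'I_n) :
  (forall j, L i0 j = 0) -> exists2 y : 'cV[R]_n, y != 0 & L *m y = 0.
Proof.
move=> H.
have : \det L^T == 0.
  by rewrite det_tr (expand_det_row L i0) big1 // => j _; rewrite H mul0r.
case/det0P => v v0 hv; exists v^T; first by rewrite trmx_eq0.
by have := congr1 trmx hv; rewrite trmx_mul trmxK trmx0.
Qed.

Definition sqn {R : realType} n (y : 'cV[R]_n) := \sum_i y i 0 ^+ 2.

Lemma sqn_ge0 {R : realType} n (y : 'cV[R]_n) : 0 <= sqn y.
Proof. by apply: sumr_ge0 => i _; rewrite sqr_ge0. Qed.

Lemma sqn_gt0 {R : realType} n (y : 'cV[R]_n) : y != 0 -> 0 < sqn y.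
Proof.
move=> y0; rewrite lt_def sqn_ge0 andbT; apply: contra y0 => /eqP s0.
apply/eqP/matrixP => i j; rewrite ord1 mxE.
have := psumr_eq0P (fun i _ => sqr_ge0 (y i 0)) s0; move=> /(_ i isT).
by move/eqP; rewrite sqrf_eq0 => /eqP.
Qed.

Lemma sqnZ {R : realType} n (a : R) (y : 'cV[R]_n) : sqn (a *: y) = a ^+ 2 * sqn y.
Proof. by rewrite /sqn mulr_sumr; apply: eq_bigr => i _; rewrite mxE exprMn. Qed.

Lemma normalize {R : realType} n (y : 'cV[R]_n) : y != 0 ->
  exists2 a : R, a != 0 & sqn (a *: y) = 1.
Proof.
move=> y0; have s0 := sqn_gt0 y0.
exists (Num.sqrt (sqn y))^-1; first by rewrite invr_eq0 gt_eqF // sqrtr_gt0.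
by rewrite sqnZ exprVn sqr_sqrtr ?mulVf ?gt_eqF // ltW.
Qed.

Lemma sqn_tr {R : realType} n (y : 'cV[R]_n) : (y^T *m y) 0 0 = sqn y.
Proof. by rewrite mxE; apply: eq_bigr => i _; rewrite mxE expr2. Qed.

Lemma eucl_sqn {R : realType} n (y : 'cV[R]_n) : eucl_cV y = Num.sqrt (sqn y).
Proof. by []. Qed.
Definition on_rows {R : realType} n k (Q : 'M[R]_n) :=
  forall i j : 'I_n, (i < k)%N -> (j < k)%N -> (Q *m Q^T) i j = (i == j)%:R.

Lemma mulmxtE {R : realType} n (Q : 'M[R]_n) i j :
  (Q *m Q^T) i j = \sum_l Q i l * Q j l.
Proof. by rewrite mxE; apply: eq_bigr => l _; rewrite mxE. Qed.

Lemma on_rows_step {R : realType} n k (Q : 'M[R]_n) : (k < n)%N -> on_rows k Q ->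
  exists Q' : 'M[R]_n, (forall i : 'I_n, (i < k)%N -> forall j, Q' i j = Q i j) /\ on_rows k.+1 Q'.
Proof.
move=> hk hQ.
pose L : 'M[R]_n := \matrix_(i, j) if (i < k)%N then Q i j else 0.
have [y y0 Ly] : exists2 y : 'cV[R]_n, y != 0 & L *m y = 0.
  by apply: (zero_row_ker (i0 := Ordinal hk)) => j; rewrite mxE ltnn.
have [a a0 ua] := normalize y0.
set u := a *: y in ua.
have Lu : forall j : 'I_n, (j < k)%N -> \sum_l Q j l * u l 0 = 0.
  move=> j jk; have : (L *m u) j 0 = 0 by rewrite /u -scalemxAr Ly scaler0 mxE.
  rewrite mxE => h; apply: etrans h; apply: eq_bigr => l _; by rewrite [L _ _]mxE jk.
pose Q' : 'M[R]_n := \matrix_(i, j) if i == Ordinal hk then u j 0 else Q i j.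
have Q'lt : forall i : 'I_n, (i < k)%N -> forall j, Q' i j = Q i j.
  move=> i ik j; rewrite mxE; case: eqP => // ei.
  by move: ik; rewrite ei ltnn.
exists Q'; split => //.
move=> i j; rewrite ltnS leq_eqVlt => /orP[/eqP ik|ik];
  rewrite ltnS leq_eqVlt => /orP[/eqP jk|jk]; rewrite mulmxtE.
- have -> : i = j by apply/val_inj; rewrite /= ik jk.
  rewrite eqxx -ua /sqn; apply: eq_bigr => l _.
  by rewrite mxE (_ : j == Ordinal hk) ?expr2 //; apply/eqP/val_inj.
- have -> : i == j = false by apply/negbTE; apply/eqP => e; move: jk; rewrite -e ik ltnn.
  rewrite mulr0n; apply: etrans (Lu j jk); apply: eq_bigr => l _; rewrite (Q'lt j jk) mulrC mxE.
  by rewrite (_ : i == Ordinal hk) //; apply/eqP/val_inj.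
- have -> : i == j = false by apply/negbTE; apply/eqP => e; move: ik; rewrite e jk ltnn.
  rewrite mulr0n; apply: etrans (Lu i ik); apply: eq_bigr => l _; rewrite (Q'lt i ik) [Q' j l]mxE.
  by rewrite (_ : j == Ordinal hk) //; apply/eqP/val_inj.
- rewrite -hQ // mulmxtE; apply: eq_bigr => l _; rewrite !Q'lt //.
Qed.

Lemma on_rows_ext {R : realType} n d k (Q : 'M[R]_n) : (k + d = n)%N -> on_rows k Q ->
  exists Q' : 'M[R]_n, (forall i : 'I_n, (i < k)%N -> forall j, Q' i j = Q i j) /\ Q' *m Q'^T = 1%:M.
Proof.
elim: d k Q => [|d IH] k Q hkd hQ.
  exists Q; split => //; apply/matrixP => i j; rewrite [RHS]mxE.
  by apply: hQ; rewrite -(addn0 k) hkd.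
have [|Q1 [h1 hQ1]] := on_rows_step (k := k) (Q := Q) _ hQ.
  by rewrite -hkd addnS ltnS leq_addr.
have [|Q2 [h2 hQ2]] := IH k.+1 Q1 _ hQ1; first by rewrite addSnnS.
exists Q2; split => // i ik j; rewrite h2 ?h1 //; exact: ltnW.
Qed.
Lemma char_poly_orth {R : realType} n (Q A : 'M[R]_n) : Q *m Q^T = 1%:M ->
  char_poly (Q *m A *m Q^T) = char_poly A.
Proof.
move=> hQ; rewrite /char_poly.
have hP : map_mx (@polyC R) Q *m map_mx (@polyC R) Q^T = 1%:M.
  by rewrite -map_mxM hQ map_mx1.
have e : char_poly_mx (Q *m A *m Q^T) =
  map_mx polyC Q *m char_poly_mx A *m map_mx polyC Q^T.
  rewrite /char_poly_mx mulmxBr mulmxBl -!map_mxM scalar_mxC -[_ *m map_mx _ Q^T]mulmxA hP.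
  by rewrite mulmx1.
rewrite e !det_mulmx mulrC mulrA -det_mulmx -map_mxM.
have -> : Q^T *m Q = 1%:M by apply: mulmx1C.
by rewrite map_mx1 det1 mul1r.
Qed.
Lemma block_conj {R : realType} n1 n2 (a : R) (Q1 D B : 'M[R]_n2) :
  B = Q1^T *m D *m Q1 ->
  block_mx (a%:M : 'M_n1) 0 0 B =
  (block_mx 1%:M 0 0 Q1)^T *m block_mx a%:M 0 0 D *m block_mx 1%:M 0 0 Q1.
Proof.
move=> ->; rewrite tr_block_mx !mulmx_block !trmx0 trmx1.
rewrite !mulmx0 !mul0mx !mul1mx !mulmx1 !addr0 !add0r.
by congr block_mx; apply/matrixP => i j; rewrite !mxE big1 // => k _; rewrite mxE mul0r.
Qed.

Lemma spectral {R : realType} m (A : 'M[R]_m) (l : 'rV[R]_m) : A^T = A ->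
  char_poly A = \prod_i ('X - (l 0 i)%:P) ->
  exists Q : 'M[R]_m, Q^T *m Q = 1%:M /\ A = Q^T *m diag_mx l *m Q.
Proof.
elim: m A l => [|m IH] A l hs hc.
  exists 1%:M; split; first by rewrite trmx1 mulmx1.
  by apply/matrixP => [[]].
set lam := l 0 0.
have : eigenvalue A lam.
  by rewrite eigenvalue_root_char hc big_ord_recl rootM root_XsubC eqxx.
case/eigenvalueP => v vA v0.
have vT0 : v^T != 0 by rewrite trmx_eq0.
have [a a0 ua] := normalize vT0.
pose w := a *: v.
have wA : w *m A = lam *: w by rewrite /w -scalemxAl vA !scalerA mulrC.
pose Q00 : 'M[R]_m.+1 := \matrix_(i, j) if i == 0 then w 0 j else 0.
have hQ00 : on_rows 1 Q00.
  move=> i j; rewrite !ltnS !leqn0 => /eqP i0 /eqP j0.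
  have -> : i = 0 by apply/val_inj.
  have -> : j = 0 by apply/val_inj.
  rewrite mulmxtE eqxx -ua; apply: eq_bigr => l' _.
  by rewrite !mxE eqxx expr2.
have [Q0 [hQ0r hQ0]] := on_rows_ext (d := m) (k := 1) (erefl _) hQ00.
have hQ0' : Q0^T *m Q0 = 1%:M by apply: mulmx1C.
have rQ0 : row 0 Q0 = w.
  by apply/rowP => j; rewrite mxE hQ0r // mxE eqxx.
pose A' := Q0 *m A *m Q0^T.
have hA's : A'^T = A' by rewrite /A' !trmx_mul trmxK hs mulmxA.
have hrow : row 0 A' = lam *: row 0 (1%:M : 'M[R]_m.+1).
  by rewrite /A' !row_mul rQ0 wA -scalemxAl -rQ0 -row_mul hQ0.
have hA'0 : forall j, A' 0 j = lam * (0 == j)%:R.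
  move=> j; have := congr1 (fun M : 'rV[R]_m.+1 => M 0 j) hrow.
  by rewrite !mxE.
have defA' : A' = Q0 *m A *m Q0^T by [].
clearbody A'.
have hA'0' : forall i, A' i 0 = lam * (i == 0)%:R.
  by move=> i; rewrite -[A']hA's mxE hA'0 eq_sym.
pose B := drsubmx (A' : 'M_(1 + m)).
have hA'b : (A' : 'M_(1 + m)) = block_mx (lam%:M : 'M_1) 0 0 B.
  rewrite -[LHS](@submxK _ 1 m 1 m); congr block_mx.
  - apply/matrixP => i j; rewrite !ord1 !mxE.
    have -> : lshift m (0 : 'I_1) = 0 by apply/val_inj.
    by rewrite hA'0 mulr_natr eqxx.
  - apply/matrixP => i j; rewrite !ord1 !mxE.
    have -> : lshift m (0 : 'I_1) = 0 by apply/val_inj.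
    by rewrite hA'0 mulr_natr mulrb.
  - apply/matrixP => i j; rewrite !ord1 !mxE.
    have -> : lshift m (0 : 'I_1) = 0 by apply/val_inj.
    by rewrite hA'0' mulr_natr mulrb.
have hB : B^T = B by rewrite /B trmx_drsub; congr drsubmx.
have e1 : char_poly A = char_poly (block_mx (lam%:M : 'M_1) 0 0 B).
  by rewrite -(char_poly_orth A hQ0) -defA' -hA'b.
have e2 : char_poly A = ('X - lam%:P) * char_poly B.
  rewrite e1 /char_poly char_block_diag_mx det_ublock det_mx11.
  by rewrite !mxE eqxx !mulr1n.
pose l' : 'rV[R]_m := \row_i l 0 (lift ord0 i).
have hcB : char_poly B = \prod_i ('X - (l' 0 i)%:P).
  apply: (@mulfI _ ('X - lam%:P)); first by rewrite polyXsubC_eq0.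
  rewrite -e2 hc big_ord_recl; congr (_ * _).
  by apply: eq_bigr => i _; rewrite mxE.
have [Q1 [hQ1 eB]] := IH B l' hB hcB.
pose G : 'M[R]_(1 + m) := block_mx (1%:M : 'M_1) 0 0 Q1.
have hG : G^T *m G = 1%:M.
  rewrite /G tr_block_mx mulmx_block !trmx0 !mulmx0 !mul0mx trmx1 mulmx1 hQ1.
  by rewrite !addr0 !add0r -scalar_mx_block.
exists (G *m Q0); split.
  by rewrite trmx_mul mulmxA -[Q0^T *m G^T *m G]mulmxA hG mulmx1.
have el : l = row_mx (\row_(j < 1) lam) l' :> 'rV_(1 + m).
  apply/rowP => j; rewrite mxE; case: splitP => k ek; rewrite mxE.
    by rewrite /lam; congr (l 0 _); apply/val_inj; rewrite /= ek; case: k {ek} => [[|]].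
  by congr (l 0 _); apply/val_inj; rewrite /= ek.
have eD : @diag_mx R (1 + m) l = block_mx (lam%:M : 'M_1) 0 0 (diag_mx l') :> 'M_(1 + m).
  rewrite el diag_mx_row; congr block_mx.
  by apply/matrixP => i j; rewrite !ord1 !mxE.
have -> : A = Q0^T *m A' *m Q0.
  by rewrite defA' !mulmxA hQ0' mul1mx -mulmxA hQ0' mulmx1.
rewrite trmx_mul !mulmxA -[Q0^T *m G^T *m _]mulmxA -[Q0^T *m (G^T *m _) *m _]mulmxA.
congr (_ *m _ *m _).
rewrite eD hA'b /G; exact: block_conj.
Qed.
Lemma frob_tr {R : realType} n (X : 'M[R]_n) :
  frob_norm X = Num.sqrt (\tr (X^T *m X)).
Proof.
rewrite /frob_norm /mxtrace exchange_big; congr Num.sqrt.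
by apply: eq_bigr => i _; rewrite mxE; apply: eq_bigr => k _; rewrite mxE expr2.
Qed.

Lemma frob_orth {R : realType} n (U X V : 'M[R]_n) :
  U *m U^T = 1%:M -> V *m V^T = 1%:M -> frob_norm (U^T *m X *m V) = frob_norm X.
Proof.
move=> hU hV; rewrite !frob_tr !trmx_mul trmxK.
rewrite -!mulmxA [U *m (U^T *m _)]mulmxA hU mul1mx.
by rewrite mxtrace_mulC -!mulmxA hV mulmx1.
Qed.

Lemma frob_diag {R : realType} n (d : 'rV[R]_n) : frob_norm (diag_mx d) = eucl_rV d.
Proof.
rewrite /frob_norm /eucl_rV; congr Num.sqrt; apply: eq_bigr => i _.
rewrite (bigD1 i) //= big1 ?addr0 => [|j ji]; first by rewrite mxE eqxx mulr1n.
by rewrite mxE eq_sym (negbTE ji) mulr0n expr0n.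
Qed.

Lemma frob_dw {R : realType} n (a b : 'rV[R]_n) (W : 'M[R]_n) :
  frob_norm (diag_mx a *m W - W *m diag_mx b) =
  Num.sqrt (\sum_i \sum_j (a 0 i - b 0 j) ^+ 2 * W i j ^+ 2).
Proof.
rewrite /frob_norm; congr Num.sqrt; apply: eq_bigr => i _; apply: eq_bigr => j _.
rewrite !mxE (bigD1 i) //= big1 ?addr0 => [|k ki]; last first.
  by rewrite mxE eq_sym (negbTE ki) mulr0n mul0r.
rewrite (bigD1 j) //= big1 ?addr0 => [|k kj]; last first.
  by rewrite mxE (negbTE kj) mulr0n mulr0.
rewrite !mxE !eqxx !mulr1n; ring.
Qed.
Lemma abel {R : realType} (a h : nat -> R) n :
  \sum_(i < n.+1) a i * h i =
  \sum_(t < n) (a t - a t.+1) * (\sum_(i < t.+1) h i) + a n * \sum_(i < n.+1) h i.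
Proof.
elim: n => [|n IH]; first by rewrite !big_ord1 big_ord0 add0r.
rewrite big_ord_recr /= IH [in RHS]big_ord_recr /= [\sum_(i < n.+2) _]big_ord_recr /=.
ring.
Qed.

Lemma abel_ge0 {R : realType} (a h : nat -> R) n :
  (forall t, (t < n)%N -> a t.+1 <= a t) ->
  (forall t, (t < n)%N -> 0 <= \sum_(i < t.+1) h i) ->
  \sum_(i < n.+1) h i = 0 -> 0 <= \sum_(i < n.+1) a i * h i.
Proof.
move=> ha hH h0; rewrite abel h0 mulr0 addr0; apply: sumr_ge0 => t _.
by apply: mulr_ge0; [rewrite subr_ge0 ha | apply: hH].
Qed.

Lemma sum_ord_cond {R : realType} n t (F : nat -> R) : (t <= n)%N ->
  \sum_(i < t) F i = \sum_(i < n) (i < t)%:R * F i.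
Proof.
move=> tn; rewrite (big_ord_widen n F tn) big_mkcond /=.
by apply: eq_bigr => i _; case: ifP; rewrite ?mul1r ?mul0r.
Qed.

Lemma rearr {R : realType} n (a b : nat -> R) (S : nat -> nat -> R) :
  (forall i j, (i <= j)%N -> (j < n)%N -> a j <= a i) ->
  (forall i j, (i <= j)%N -> (j < n)%N -> b j <= b i) ->
  (forall i j, (i < n)%N -> (j < n)%N -> 0 <= S i j) ->
  (forall i, (i < n)%N -> \sum_(j < n) S i j = 1) ->
  (forall j, (j < n)%N -> \sum_(i < n) S i j = 1) ->
  \sum_(i < n) \sum_(j < n) a i * b j * S i j <= \sum_(i < n) a i * b i.
Proof.
case: n => [|N] ha hb hS hr hc; first by rewrite !big_ord0.
pose h i := b i - \sum_(j < N.+1) b j * S i j.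
rewrite -subr_ge0.
have -> : \sum_(i < N.+1) a i * b i - \sum_(i < N.+1) \sum_(j < N.+1) a i * b j * S i j =
    \sum_(i < N.+1) a i * h i.
  rewrite -sumrB; apply: eq_bigr => i _; rewrite /h mulrBr mulr_sumr.
  by congr (_ - _); apply: eq_bigr => j _; rewrite mulrA.
apply: abel_ge0.
- by move=> t tN; apply: ha => //; rewrite ltnS.
- move=> t tN.
  pose c j := \sum_(i < t.+1) S i j.
  have tn : (t.+1 <= N.+1)%N by rewrite ltnS ltnW.
  have -> : \sum_(i < t.+1) h i = \sum_(j < N.+1) b j * ((j < t.+1)%:R - c j).
    rewrite /h sumrB (sum_ord_cond b tn).
    under [RHS]eq_bigr do rewrite mulrBr.
    rewrite [RHS]sumrB; congr (_ - _); first by apply: eq_bigr => j _; rewrite mulrC.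
    rewrite /c exchange_big /=; apply: eq_bigr => j _; rewrite mulr_sumr.
    by apply: eq_bigr => i _.
  have c0 : forall j : 'I_N.+1, 0 <= c j.
    by move=> j; apply: sumr_ge0 => i _; apply: hS => //; apply: leq_trans (ltn_ord i) tn.
  have c1 : forall j : 'I_N.+1, c j <= 1.
    move=> j; rewrite -(hc j (ltn_ord j)) /c (sum_ord_cond (S^~ j) tn).
    apply: ler_sum => i _; case: (i < t.+1)%N; rewrite ?mul1r ?mul0r //.
    exact: hS.
  apply: le_trans (_ : \sum_(j < N.+1) b t * ((j < t.+1)%:R - c j) <= _).
    rewrite -mulr_sumr sumrB.
    have e1 : \sum_(j < N.+1) c j = \sum_(i < t.+1) (1 : R).
      rewrite /c exchange_big /=; apply: eq_bigr => i _; apply: hr.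
      exact: leq_trans (ltn_ord i) tn.
    have e2 : \sum_(j < N.+1) (j < t.+1)%:R = \sum_(i < t.+1) (1 : R).
      by rewrite (sum_ord_cond (fun=> 1) tn); apply: eq_bigr => j _; rewrite mulr1.
    by rewrite e1 e2 subrr mulr0.
  apply: ler_sum => j _; have := c0 j; have := c1 j.
  case: ltnP => jt h1 h0.
    apply: ler_wpM2r; first by rewrite subr_ge0.
    by apply: hb; [rewrite -ltnS | exact: ltnW].
  apply: ler_wnM2r; first by rewrite sub0r oppr_le0.
  by apply: hb; [exact: ltnW | exact: ltn_ord].
- rewrite /h sumrB exchange_big /=; apply/eqP; rewrite subr_eq0; apply/eqP.
  by apply: eq_bigr => j _; rewrite -mulr_sumr hc ?mulr1.
Qed.
Local Open Scope classical_set_scope.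

Lemma sup_max {R : realType} (E : set R) e : E e -> (forall z, E z -> z <= e) -> sup E = e.
Proof.
move=> Ee ub; apply/le_anti/andP; split.
  by apply: ge_sup; [exists e | exact: ub].
by apply: ub_le_sup => //; exists e.
Qed.

Lemma eucl_orth {R : realType} n (U : 'M[R]_n) (x : 'cV[R]_n) :
  U^T *m U = 1%:M -> eucl_cV (U *m x) = eucl_cV x.
Proof.
move=> hU; rewrite !eucl_sqn -!sqn_tr trmx_mul -mulmxA [U^T *m _]mulmxA hU.
by rewrite mul1mx.
Qed.

Lemma sqn_le1 {R : realType} n (x : 'cV[R]_n) j : sqn x = 1 -> x j 0 ^+ 2 <= 1.
Proof.
move=> <-; rewrite /sqn (bigD1 j) //= lerDl; apply: sumr_ge0 => i _; exact: sqr_ge0.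
Qed.

Lemma eucl1 {R : realType} n (x : 'cV[R]_n) : eucl_cV x = 1 -> sqn x = 1.
Proof.
rewrite eucl_sqn => h; have := sqr_sqrtr (sqn_ge0 x); by rewrite h expr1n => <-.
Qed.

Lemma sqn1_eucl {R : realType} n (x : 'cV[R]_n) : sqn x = 1 -> eucl_cV x = 1.
Proof. by rewrite eucl_sqn => ->; rewrite sqrtr1. Qed.

Lemma op2_has_ub {R : realType} n (M : 'M[R]_n) :
  has_ubound [set eucl_cV (M *m x) | x in [set x : 'cV[R]_n | eucl_cV x = 1]].
Proof.
exists (Num.sqrt (\sum_i (\sum_j `|M i j|) ^+ 2)) => _ [x /eucl1 hx <-].
rewrite eucl_sqn ler_sqrt; last by apply: sumr_ge0 => i _; exact: sqr_ge0.
apply: ler_sum => i _; rewrite mxE.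
have h1 : `|\sum_j M i j * x j 0| <= \sum_j `|M i j|.
  apply: le_trans (ler_norm_sum _ _ _) _; apply: ler_sum => j _.
  rewrite normrM; have := sqn_le1 j hx; have := normr_ge0 (M i j).
  have : x j 0 ^+ 2 = `|x j 0| ^+ 2 by rewrite real_normK ?num_real.
  move=> e; rewrite e => *; have := normr_ge0 (x j 0); nra.
have := normr_ge0 (\sum_j M i j * x j 0).
have : (\sum_j M i j * x j 0) ^+ 2 = `|\sum_j M i j * x j 0| ^+ 2.
  by rewrite real_normK ?num_real.
move=> -> *; nra.
Qed.

Lemma op2_ge {R : realType} n (M : 'M[R]_n) x :
  eucl_cV x = 1 -> eucl_cV (M *m x) <= op2_norm M.
Proof. by move=> hx; apply: ub_le_sup (op2_has_ub M) _ _; exists x. Qed.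

Lemma sqn_delta {R : realType} n (k : 'I_n) : sqn (delta_mx k 0 : 'cV[R]_n) = 1.
Proof.
rewrite /sqn (bigD1 k) //= big1 ?addr0 => [|i ik]; first by rewrite mxE !eqxx expr1n.
by rewrite mxE (negbTE ik) expr0n.
Qed.

Lemma op2_ge0 {R : realType} n (M : 'M[R]_n) : 0 <= op2_norm M.
Proof.
case: n M => [|n] M.
  rewrite /op2_norm (_ : [set x : 'cV[R]_0 | eucl_cV x = 1] = set0) ?image_set0 ?sup0 //.
  apply/seteqP; split => x //=; rewrite eucl_sqn /sqn big_ord0 sqrtr0 => /esym/eqP.
  by rewrite oner_eq0.
apply: le_trans (op2_ge M (sqn1_eucl (sqn_delta 0))); exact: sqrtr_ge0.
Qed.
Lemma op2_orth {R : realType} n (U X V : 'M[R]_n) :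
  U *m U^T = 1%:M -> V^T *m V = 1%:M -> V *m V^T = 1%:M ->
  op2_norm (U^T *m X *m V) = op2_norm X.
Proof.
move=> hU hV hV'.
have hU' : U^T^T *m U^T = 1%:M by rewrite trmxK.
have hV2 : V^T^T *m V^T = 1%:M by rewrite trmxK.
rewrite /op2_norm; congr sup; apply/seteqP; split => _ [x hx <-].
  exists (V *m x); first by rewrite /= eucl_orth.
  by rewrite -!mulmxA [RHS]eucl_orth.
exists (V^T *m x); first by rewrite /= eucl_orth.
by rewrite -!mulmxA [LHS]eucl_orth // [V *m _]mulmxA hV' mul1mx.
Qed.

Lemma op2_diag {R : realType} n (d : 'rV[R]_n) : op2_norm (diag_mx d) = inf_rV d.
Proof.
rewrite /op2_norm /inf_rV.
have ub : forall x : 'cV[R]_n, eucl_cV x = 1 ->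
    eucl_cV (diag_mx d *m x) <= \big[Num.max/0]_(i < n) `|d 0 i|.
  move=> x /eucl1 hx; set mu := \big[Num.max/0]_(i < n) `|d 0 i|.
  have mu0 : 0 <= mu by apply: bigmax_ge_id.
  rewrite eucl_sqn -(ger0_norm mu0) -sqrtr_sqr ler_sqrt ?sqr_ge0 //.
  rewrite -[X in _ <= X]mulr1 -hx /sqn mulr_sumr; apply: ler_sum => i _.
  rewrite mul_diag_mx mxE exprMn; apply: ler_wpM2r; first exact: sqr_ge0.
  have : `|d 0 i| <= mu by apply: le_bigmax.
  have := normr_ge0 (d 0 i).
  rewrite -[d 0 i ^+ 2]real_normK ?num_real // => *; nra.
case: n d ub => [|n] d ub.
  rewrite big_ord0 (_ : [set x : 'cV[R]_0 | eucl_cV x = 1] = set0) ?image_set0 ?sup0 //.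
  apply/seteqP; split => x //=; rewrite eucl_sqn /sqn big_ord0 sqrtr0 => /esym/eqP.
  by rewrite oner_eq0.
have [k _ ek] := @eq_bigmax _ _ _ 0 (0 : 'I_n.+1) predT (fun i => `|d 0 i|) isT
  (fun i _ => normr_ge0 _).
apply: sup_max; last by move=> _ [x hx <-]; exact: ub.
exists (delta_mx k 0); first exact: sqn1_eucl (sqn_delta k).
rewrite ek eucl_sqn /sqn (bigD1 k) //= big1 ?addr0 => [|i ik].
  by rewrite mul_diag_mx mxE mxE !eqxx mulr1 sqrtr_sqr.
by rewrite mul_diag_mx !mxE (negbTE ik) mulr0 expr0n.
Qed.
Lemma two_constraints {R : realType} n (U V : 'M[R]_n) (k : 'I_n) :
  exists y : 'cV[R]_n, [/\ sqn y = 1,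
    (forall i : 'I_n, (i < k)%N -> (U *m y) i 0 = 0) &
    (forall i : 'I_n, (k < i)%N -> (V *m y) i 0 = 0)].
Proof.
pose L : 'M[R]_n := \matrix_(i, j) if (i < k)%N then U i j
  else if (k < i)%N then V i j else 0.
have [y0 y00 Ly] : exists2 y : 'cV[R]_n, y != 0 & L *m y = 0.
  by apply: (zero_row_ker (i0 := k)) => j; rewrite mxE ltnn.
have [a a0 ua] := normalize y00.
have Ly' : forall i, (L *m y0) i 0 = 0 by move=> i; rewrite Ly mxE.
exists (a *: y0); split => // i ik.
  rewrite -scalemxAr mxE (_ : (U *m y0) i 0 = 0) ?mulr0 // -(Ly' i) !mxE.
  by apply: eq_bigr => j _; rewrite mxE ik.
rewrite -scalemxAr mxE (_ : (V *m y0) i 0 = 0) ?mulr0 // -(Ly' i) !mxE.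
apply: eq_bigr => j _; rewrite mxE ik (_ : (i < k)%N = false) //.
by apply/negbTE; rewrite -leqNgt ltnW.
Qed.

Lemma quad {R : realType} n (d : 'rV[R]_n) (y : 'cV[R]_n) :
  (y^T *m diag_mx d *m y) 0 0 = \sum_i d 0 i * y i 0 ^+ 2.
Proof.
rewrite mxE; apply: eq_bigr => i _; rewrite mul_mx_diag !mxE expr2; ring.
Qed.

Lemma qf_ge {R : realType} n (d : 'rV[R]_n) (y : 'cV[R]_n) (k : 'I_n) :
  (forall i j : 'I_n, (i <= j)%N -> d 0 j <= d 0 i) -> sqn y = 1 ->
  (forall i : 'I_n, (k < i)%N -> y i 0 = 0) -> d 0 k <= \sum_i d 0 i * y i 0 ^+ 2.
Proof.
move=> hd hy hz; rewrite -[d 0 k]mulr1 -hy /sqn mulr_sumr; apply: ler_sum => i _.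
case: (leqP i k) => ik; first by apply: ler_wpM2r; [exact: sqr_ge0 | exact: hd].
by rewrite hz // expr0n !mulr0.
Qed.

Lemma qf_le {R : realType} n (d : 'rV[R]_n) (y : 'cV[R]_n) (k : 'I_n) :
  (forall i j : 'I_n, (i <= j)%N -> d 0 j <= d 0 i) -> sqn y = 1 ->
  (forall i : 'I_n, (i < k)%N -> y i 0 = 0) -> \sum_i d 0 i * y i 0 ^+ 2 <= d 0 k.
Proof.
move=> hd hy hz; rewrite -[d 0 k]mulr1 -hy /sqn mulr_sumr; apply: ler_sum => i _.
case: (leqP k i) => ik; first by apply: ler_wpM2r; [exact: sqr_ge0 | exact: hd].
by rewrite hz // expr0n !mulr0.
Qed.

Lemma cauchy1 {R : realType} n (z v : 'cV[R]_n) : sqn z = 1 ->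
  (z^T *m v) 0 0 <= eucl_cV v.
Proof.
move=> hz; set t := (z^T *m v) 0 0.
have et : t = \sum_i z i 0 * v i 0 by rewrite /t mxE; apply: eq_bigr => i _; rewrite mxE.
case: (lerP t 0) => t0; first by apply: le_trans t0 _; exact: sqrtr_ge0.
have e : \sum_i (v i 0 - t * z i 0) ^+ 2 = sqn v - t ^+ 2.
  transitivity (\sum_i v i 0 ^+ 2 - t *+ 2 * \sum_i z i 0 * v i 0 + t ^+ 2 * \sum_i z i 0 ^+ 2).
    rewrite !mulr_sumr -sumrB -big_split /=; apply: eq_bigr => i _; ring.
  rewrite -/(sqn v) -/(sqn z) hz -et; ring.
have : 0 <= sqn v - t ^+ 2 by rewrite -e; apply: sumr_ge0 => i _; exact: sqr_ge0.
rewrite subr_ge0 => h; rewrite eucl_sqn -(ger0_norm (ltW t0)) -sqrtr_sqr ler_sqrt //.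
exact: sqn_ge0.
Qed.

Lemma sqn_orth {R : realType} n (W : 'M[R]_n) (x : 'cV[R]_n) :
  W^T *m W = 1%:M -> sqn (W *m x) = sqn x.
Proof.
move=> hW; rewrite -!sqn_tr trmx_mul -mulmxA [W^T *m _]mulmxA hW mul1mx //.
Qed.

Lemma sqnN {R : realType} n (y : 'cV[R]_n) : sqn (- y) = sqn y.
Proof. by apply: eq_bigr => i _; rewrite mxE sqrrN. Qed.

Lemma op2_lb {R : realType} n (a b : 'rV[R]_n) (W : 'M[R]_n) (k : 'I_n) :
  (forall i j : 'I_n, (i <= j)%N -> a 0 j <= a 0 i) ->
  (forall i j : 'I_n, (i <= j)%N -> b 0 j <= b 0 i) ->
  W^T *m W = 1%:M ->
  `|a 0 k - b 0 k| <= op2_norm (diag_mx a *m W - W *m diag_mx b).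
Proof.
move=> ha hb hW; set M := diag_mx a *m W - W *m diag_mx b.
have key : forall x : 'cV[R]_n,
    ((W *m x)^T *m M *m x) 0 0 =
    ((W *m x)^T *m diag_mx a *m (W *m x)) 0 0 - (x^T *m diag_mx b *m x) 0 0.
  move=> x; rewrite /M mulmxBr mulmxBl mxE [X in _ + X = _]mxE; congr (_ - _).
    by rewrite !mulmxA.
  by rewrite trmx_mul -!mulmxA [W^T *m (W *m _)]mulmxA hW mul1mx.
have opx : forall x z : 'cV[R]_n, sqn x = 1 -> sqn z = 1 ->
    ((z^T *m M) *m x) 0 0 <= op2_norm M.
  move=> x z hx hz; apply: le_trans (op2_ge M (sqn1_eucl hx)).
  by rewrite -mulmxA; exact: cauchy1.
case: (lerP (b 0 k) (a 0 k)) => hab.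
  have [x [hx h1 h2]] := two_constraints 1%:M W k.
  apply: le_trans (opx x (W *m x) hx _); last first.
    by rewrite sqn_orth.
  rewrite key !quad; apply: lerB.
    apply: qf_ge => //; first by rewrite sqn_orth.
  apply: qf_le => // i ik; by have := h1 i ik; rewrite mul1mx.
have [x [hx h1 h2]] := two_constraints W 1%:M k.

apply: le_trans (opx x (- (W *m x)) hx _); last first.
  by rewrite sqnN sqn_orth.
have -> : ((- (W *m x))^T *m M *m x) 0 0 = - (((W *m x)^T *m M *m x) 0 0).
  by rewrite linearN /= !mulNmx mxE.
rewrite key !quad opprB; apply: lerB.
  apply: qf_ge => // i ik; by have := h2 i ik; rewrite mul1mx.
by apply: qf_le => //; rewrite sqn_orth.
Qed.
Lemma mat_norm_orth {R : realType} c n (U X V : 'M[R]_n) :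
  U *m U^T = 1%:M -> V^T *m V = 1%:M -> V *m V^T = 1%:M ->
  mat_norm c (U^T *m X *m V) = mat_norm c X.
Proof.
by case: c => hU hV hV' /=; [exact: frob_orth | exact: op2_orth].
Qed.

Lemma cost_eq {R : realType} c n (Ai Aj Qi Qj P : 'M[R]_n) (a b : 'rV[R]_n) :
  Qi^T *m Qi = 1%:M -> Qj^T *m Qj = 1%:M ->
  Ai = Qi^T *m diag_mx a *m Qi -> Aj = Qj^T *m diag_mx b *m Qj ->
  s_cost c Ai Aj P =
  mat_norm c (diag_mx a *m (Qi *m P *m Qj^T) - (Qi *m P *m Qj^T) *m diag_mx b).
Proof.
move=> hi hj ei ej.
have hi' : Qi *m Qi^T = 1%:M by apply: mulmx1C.
have hj' : Qj *m Qj^T = 1%:M by apply: mulmx1C.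
rewrite /s_cost -[RHS](@mat_norm_orth R c n Qi _ Qj hi' hj hj'); congr mat_norm.
rewrite mulmxBr mulmxBl ei ej; congr (_ - _).
  by rewrite !mulmxA -[_ *m Qj^T *m Qj]mulmxA hj mulmx1.
by rewrite !mulmxA hi mul1mx.
Qed.

Lemma diag_mxB {R : realType} n (a b : 'rV[R]_n) :
  diag_mx a - diag_mx b = diag_mx (a - b).
Proof. by apply/matrixP => i j; rewrite !mxE mulrnBl. Qed.

Lemma cost_one {R : realType} c n (a b : 'rV[R]_n) :
  mat_norm c (diag_mx a *m 1%:M - 1%:M *m diag_mx b) = vec_norm c (a - b).
Proof.
rewrite mulmx1 mul1mx diag_mxB; case: c => /=; [exact: frob_diag | exact: op2_diag].
Qed.

Lemma rearr_ord {R : realType} n (a b : 'rV[R]_n) (S : 'M[R]_n) :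
  (forall i j : 'I_n, (i <= j)%N -> a 0 j <= a 0 i) ->
  (forall i j : 'I_n, (i <= j)%N -> b 0 j <= b 0 i) ->
  (forall i j, 0 <= S i j) ->
  (forall i, \sum_j S i j = 1) -> (forall j, \sum_i S i j = 1) ->
  \sum_i \sum_j a 0 i * b 0 j * S i j <= \sum_i a 0 i * b 0 i.
Proof.
case: n a b S => [|N] a b S ha hb hS hr hc; first by rewrite !big_ord0.
pose a' (k : nat) := a 0 (inord k).
pose b' (k : nat) := b 0 (inord k).
pose S' (k l : nat) := S (inord k) (inord l).
have -> : \sum_i \sum_j a 0 i * b 0 j * S i j =
    \sum_(i < N.+1) \sum_(j < N.+1) a' i * b' j * S' i j.
  by apply: eq_bigr => i _; apply: eq_bigr => j _; rewrite /a' /b' /S' !inord_val.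
have -> : \sum_i a 0 i * b 0 i = \sum_(i < N.+1) a' i * b' i.
  by apply: eq_bigr => i _; rewrite /a' /b' !inord_val.
apply: rearr.
- move=> i j ij jn; apply: ha; rewrite !inordK //; exact: leq_ltn_trans jn.
- move=> i j ij jn; apply: hb; rewrite !inordK //; exact: leq_ltn_trans jn.
- by move=> i j _ _; apply: hS.
- move=> i iN; rewrite -(hr (inord i)); apply: eq_bigr => j _.
  by rewrite /S' inord_val.
- move=> j jN; rewrite -(hc (inord j)); apply: eq_bigr => i _.
  by rewrite /S' inord_val.
Qed.

Lemma lower_bound {R : realType} c n (a b : 'rV[R]_n) (W : 'M[R]_n) :
  (forall i j : 'I_n, (i <= j)%N -> a 0 j <= a 0 i) ->
  (forall i j : 'I_n, (i <= j)%N -> b 0 j <= b 0 i) ->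
  W^T *m W = 1%:M ->
  vec_norm c (a - b) <= mat_norm c (diag_mx a *m W - W *m diag_mx b).
Proof.
move=> ha hb hW; case: c => /=; last first.
  rewrite /inf_rV; apply: bigmax_le; first exact: op2_ge0.
  by move=> k _; rewrite !mxE; exact: op2_lb.
have hW' : W *m W^T = 1%:M by apply: mulmx1C.
rewrite frob_dw /eucl_rV ler_sqrt; last first.
  by apply: sumr_ge0 => i _; apply: sumr_ge0 => j _; apply: mulr_ge0; exact: sqr_ge0.
pose S : 'M[R]_n := \matrix_(i, j) W i j ^+ 2.
have hr : forall i, \sum_j S i j = 1.
  move=> i; have := congr1 (fun M : 'M[R]_n => M i i) hW'.
  rewrite mulmxtE mxE eqxx mulr1n => <-; apply: eq_bigr => j _; by rewrite mxE expr2.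
have hc : forall j, \sum_i S i j = 1.
  move=> j; have := congr1 (fun M : 'M[R]_n => M j j) hW.
  rewrite mxE [RHS]mxE eqxx mulr1n => <-; apply: eq_bigr => i _; by rewrite !mxE expr2.
have hS : forall i j, 0 <= S i j by move=> i j; rewrite mxE sqr_ge0.
have hR := @rearr_ord R n a b S ha hb hS hr hc.
have e1 : \sum_i \sum_j (a 0 i - b 0 j) ^+ 2 * W i j ^+ 2 =
   \sum_i a 0 i ^+ 2 + \sum_j b 0 j ^+ 2 - 2 * \sum_i \sum_j a 0 i * b 0 j * S i j.
  have t1 : \sum_i \sum_j a 0 i ^+ 2 * S i j = \sum_i a 0 i ^+ 2.
    by apply: eq_bigr => i _; rewrite -mulr_sumr hr mulr1.
  have t2 : \sum_i \sum_j b 0 j ^+ 2 * S i j = \sum_j b 0 j ^+ 2.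
    by rewrite exchange_big /=; apply: eq_bigr => j _; rewrite -mulr_sumr hc mulr1.
  rewrite -t1 -t2 mulr_sumr -big_split /= -sumrB; apply: eq_bigr => i _.
  rewrite mulr_sumr -big_split /= -sumrB; apply: eq_bigr => j _; rewrite mxE; ring.
have e2 : \sum_i (a - b) 0 i ^+ 2 =
   \sum_i a 0 i ^+ 2 + \sum_j b 0 j ^+ 2 - 2 * \sum_i a 0 i * b 0 i.
  rewrite mulr_sumr -big_split /= -sumrB; apply: eq_bigr => i _; rewrite !mxE; ring.
rewrite e1 e2; lra.
Qed.

Local Close Scope classical_set_scope.
Unset Implicit Arguments.
Set Strict Implicit.
Local Open Scope ring_scope.

Theorem theorem7 (R : realType) (c : norm_choice) (m n : nat)
  (A : 'I_n -> 'M[R]_m) (Lam : 'I_n -> 'rV[R]_m) :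
  (forall i, symmetric_mx (A i)) ->
  (forall i, eigvals_desc (A i) (Lam i)) ->
  is_dG c A (2^-1 * \sum_(i < n) \sum_(j < n) vec_norm c (Lam i - Lam j)).
Proof.
move=> hs he.
have hex : forall i, exists Q : 'M[R]_m,
    Q^T *m Q = 1%:M /\ A i = Q^T *m diag_mx (Lam i) *m Q.
  by move=> i; apply: spectral; [exact: hs | exact: (he i).1].
have [Q hQ] := choice hex.
have srt : forall i (k l : 'I_m), (k <= l)%N -> Lam i 0 l <= Lam i 0 k.
  by move=> i; exact: (he i).2.
have hQ' : forall i, Q i *m (Q i)^T = 1%:M by move=> i; apply: mulmx1C; exact: (hQ i).1.
have cost : forall i j P, P^T *m P = 1%:M ->
    vec_norm c (Lam i - Lam j) <= s_cost c (A i) (A j) P.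
  move=> i j P hP; rewrite (@cost_eq R c m _ _ _ _ P _ _ (hQ i).1 (hQ j).1 (hQ i).2 (hQ j).2).
  apply: lower_bound; [exact: srt | exact: srt |].
  rewrite !trmx_mul trmxK !mulmxA -[_ *m (Q i)^T *m Q i]mulmxA (hQ i).1 mulmx1.
  by rewrite -[_ *m P^T *m P]mulmxA hP mulmx1 hQ'.
split.
  exists (fun i j => (Q i)^T *m Q j); split.
    split; first by move=> i j; rewrite /orthogonal_mx trmx_mul trmxK mulmxA
      -[_ *m Q i *m _]mulmxA hQ' mulmx1 (hQ j).1.
    split; first by move=> i j k; rewrite mulmxA -[_ *m Q k *m _]mulmxA hQ' mulmx1.
    by move=> i; exact: (hQ i).1.
  rewrite /sync_cost; congr (_ * _); apply: eq_bigr => i _; apply: eq_bigr => j _.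
  rewrite (@cost_eq R c m _ _ _ _ _ _ _ (hQ i).1 (hQ j).1 (hQ i).2 (hQ j).2).
  have -> : Q i *m ((Q i)^T *m Q j) *m (Q j)^T = 1%:M by rewrite mulmxA hQ' mul1mx hQ'.
  exact: cost_one.
move=> P [hP _]; rewrite /sync_cost; apply: ler_wpM2l; first by rewrite invr_ge0.
by apply: ler_sum => i _; apply: ler_sum => j _; apply: cost; exact: hP.
Qed.
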